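(* Let $A$ be a positively graded, graded-commutative DG algebra with $A\not\simeq 0$ and $s=\operatorname{amp}(H(A))<\infty$. Let $L$ be a non-zero semifree DG $A$-module with a semibasis $B$ concentrated in degrees $n,n+1,\ldots,n+m$, where $n,m\in\mathbb{Z}$ and $m\geq 0$. Then $\inf(H(L))\geq n$ and $\sup(H(L))\leq s+n+m$, so $\operatorname{amp}(H(L))\leq s+m$.
   Context: Complexes are indexed homologically. A DG algebra is a complex $A$ with a unital, associative, graded-commutative chain map multiplication $A\otimes A\to A$; it is positively graded if $A_i=0$ for $i<0$. For a complex $X$, $\sup(X)=\sup\{i: X_i\neq 0\}$, $\inf(X)=\inf\{i: X_i\neq0\}$, $\operatorname{amp}(X)=\sup(X)-\inf(X)$; these are applied to the homology $H(X)$. A DG $A$-module $X$ with $\inf(X)>-\infty$ is semifree if its underlying graded module is free over the underlying graded algebra $A^\natural=\bigoplus_i A_i$; a semibasis is a set of homogeneous elements forming a basis of this free module. $A\not\simeq0$ means $H(A)\neq0$. *)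

(* Defs.v *)
From HB Require Import structures.
From mathcomp Require Import all_boot all_order all_algebra.
Set Implicit Arguments. Unset Strict Implicit. Unset Printing Implicit Defensive.
Import Order.TTheory GRing.Theory Num.Theory.
Local Open Scope ring_scope.

Definition tr (C : int -> Type) (i j : int) (e : i = j) (x : C i) : C j :=
  eq_rect i C x j e.
Arguments tr C {i j} e x.

Definition ksign (V : zmodType) (i : int) (x : V) : V :=
  if odd `|i|%N then - x else x.

Lemma deg_dl (i j : int) : (i - 1) + j = (i + j) - 1.
Proof. by rewrite addrAC. Qed.
Lemma deg_dr (i j : int) : i + (j - 1) = (i + j) - 1.
Proof. by rewrite addrA. Qed.
Lemma deg_assoc (i j k : int) : i + (j + k) = i + j + k.
Proof. by rewrite addrA. Qed.
Lemma deg_0l (j : int) : 0 + j = j.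
Proof. by rewrite add0r. Qed.
Lemma deg_0r (i : int) : i + 0 = i.
Proof. by rewrite addr0. Qed.
Lemma deg_comm (i j : int) : j + i = i + j.
Proof. by rewrite addrC. Qed.
Lemma deg_basis (k d : int) : (k - d) + d = k.
Proof. by rewrite subrK. Qed.
Lemma deg_succ (k : int) : (k + 1) - 1 = k.
Proof. by rewrite addrK. Qed.

Record DGA := {
  dga_c : int -> zmodType;
  dga_d : forall i, dga_c i -> dga_c (i - 1);
  dga_mul : forall i j, dga_c i -> dga_c j -> dga_c (i + j);
  dga_one : dga_c 0;
  dga_d_add : forall i (x y : dga_c i), dga_d (x + y) = dga_d x + dga_d y;
  dga_dd : forall i (x : dga_c i), dga_d (dga_d x) = 0;
  dga_mul_addl : forall i j (a a' : dga_c i) (b : dga_c j),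
      dga_mul (a + a') b = dga_mul a b + dga_mul a' b;
  dga_mul_addr : forall i j (a : dga_c i) (b b' : dga_c j),
      dga_mul a (b + b') = dga_mul a b + dga_mul a b';
  dga_mul_assoc : forall i j k (a : dga_c i) (b : dga_c j) (c : dga_c k),
      dga_mul (dga_mul a b) c = tr dga_c (deg_assoc i j k) (dga_mul a (dga_mul b c));
  dga_mul_1l : forall j (b : dga_c j), dga_mul dga_one b = tr dga_c (esym (deg_0l j)) b;
  dga_mul_1r : forall i (a : dga_c i), dga_mul a dga_one = tr dga_c (esym (deg_0r i)) a;
  dga_comm : forall i j (a : dga_c i) (b : dga_c j),
      dga_mul a b = tr dga_c (deg_comm i j) (ksign (i * j) (dga_mul b a));
  dga_leibniz : forall i j (a : dga_c i) (b : dga_c j),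
      dga_d (dga_mul a b) =
        tr dga_c (deg_dl i j) (dga_mul (dga_d a) b)
        + ksign i (tr dga_c (deg_dr i j) (dga_mul a (dga_d b)))
}.

Definition positively_graded (A : DGA) : Prop :=
  forall i : int, i < 0 -> forall x : dga_c A i, x = 0.

Record DGMod (A : DGA) := {
  dgm_c : int -> zmodType;
  dgm_d : forall i, dgm_c i -> dgm_c (i - 1);
  dgm_act : forall i j, dga_c A i -> dgm_c j -> dgm_c (i + j);
  dgm_d_add : forall i (x y : dgm_c i), dgm_d (x + y) = dgm_d x + dgm_d y;
  dgm_dd : forall i (x : dgm_c i), dgm_d (dgm_d x) = 0;
  dgm_act_addl : forall i j (a a' : dga_c A i) (x : dgm_c j),
      dgm_act (a + a') x = dgm_act a x + dgm_act a' x;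
  dgm_act_addr : forall i j (a : dga_c A i) (x x' : dgm_c j),
      dgm_act a (x + x') = dgm_act a x + dgm_act a x';
  dgm_act_assoc : forall i j k (a : dga_c A i) (b : dga_c A j) (x : dgm_c k),
      dgm_act (dga_mul a b) x = tr dgm_c (deg_assoc i j k) (dgm_act a (dgm_act b x));
  dgm_act_1 : forall j (x : dgm_c j),
      dgm_act (dga_one A) x = tr dgm_c (esym (deg_0l j)) x;
  dgm_leibniz : forall i j (a : dga_c A i) (x : dgm_c j),
      dgm_d (dgm_act a x) =
        tr dgm_c (deg_dl i j) (dgm_act (dga_d a) x)
        + ksign i (tr dgm_c (deg_dr i j) (dgm_act a (dgm_d x)))
}.

Definition homology_vanishes (C : int -> zmodType)
    (d : forall i, C i -> C (i - 1)) (k : int) : Prop :=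
  forall z : C k, d k z = 0 ->
    exists y : C (k + 1), z = tr C (deg_succ k) (d (k + 1) y).

Definition HA_vanishes (A : DGA) (k : int) := homology_vanishes (@dga_d A) k.
Definition HL_vanishes (A : DGA) (L : DGMod A) (k : int) :=
  homology_vanishes (@dgm_d A L) k.

Definition HA_nonzero_amp (A : DGA) (s : int) : Prop :=
  exists i0 i1 : int,
    [/\ ~ HA_vanishes A i0, ~ HA_vanishes A i1,
        (forall k, ~ HA_vanishes A k -> i0 <= k <= i1) & s = i1 - i0].

Definition is_semibasis (A : DGA) (L : DGMod A) (I : eqType) (deg : I -> int)
    (e : forall b : I, dgm_c L (deg b)) : Prop :=
  (forall (k : int) (x : dgm_c L k), exists (s : seq I)
       (c : forall b : I, dga_c A (k - deg b)),
       x = \sum_(b <- s) tr (dgm_c L) (deg_basis k (deg b)) (dgm_act (c b) (e b)))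
  /\
  (forall (k : int) (s : seq I) (c : forall b : I, dga_c A (k - deg b)),
       uniq s ->
       \sum_(b <- s) tr (dgm_c L) (deg_basis k (deg b)) (dgm_act (c b) (e b)) = 0 ->
       forall b, b \in s -> c b = 0).

Definition bounded_below (A : DGA) (L : DGMod A) : Prop :=
  exists k0 : int, forall k, k < k0 -> forall x : dgm_c L k, x = 0.

(* Main.v *)
Require Import Defs.
From mathcomp Require Import all_boot all_order all_algebra.
From Stdlib Require Import Classical ClassicalEpsilon.
From mathcomp Require Import zify.
Set Implicit Arguments. Unset Strict Implicit. Unset Printing Implicit Defensive.
Import Order.TTheory GRing.Theory Num.Theory.
Local Open Scope ring_scope.

Lemma tr_irr (C : int -> Type) i j (e e' : i = j) (x : C i) : tr C e x = tr C e' x.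
Proof. by rewrite (eq_irrelevance e e'). Qed.
Lemma tr_id (C : int -> Type) i (e : i = i) x : tr C e x = x.
Proof. by rewrite (eq_irrelevance e erefl). Qed.
Lemma tr_tr (C : int -> Type) i j k (e1 : i = j) (e2 : j = k) x :
  tr C e2 (tr C e1 x) = tr C (etrans e1 e2) x.
Proof. by case: k / e2. Qed.
Lemma tr_nat (C D : int -> Type) (f : int -> int) (F : forall i, C i -> D (f i))
  i j (e : i = j) x : F j (tr C e x) = tr D (f_equal f e) (F i x).
Proof. by case: j / e. Qed.
Lemma tr0 (C : int -> zmodType) i j (e : i = j) : tr C e 0 = 0.
Proof. by case: j / e. Qed.
Lemma trD (C : int -> zmodType) i j (e : i = j) x y : tr C e (x + y) = tr C e x + tr C e y.
Proof. by case: j / e. Qed.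
Lemma trN (C : int -> zmodType) i j (e : i = j) x : tr C e (- x) = - tr C e x.
Proof. by case: j / e. Qed.
Lemma trMn (C : int -> zmodType) i j (e : i = j) x n : tr C e (x *+ n) = tr C e x *+ n.
Proof. by case: j / e. Qed.
Lemma tr_eq0 (C : int -> zmodType) i j (e : i = j) x : tr C e x = 0 -> x = 0.
Proof. by case: j / e. Qed.
Lemma tr_sum (C : int -> zmodType) i j (e : i = j) (T : Type) (s : seq T) (F : T -> C i) :
  tr C e (\sum_(t <- s) F t) = \sum_(t <- s) tr C e (F t).
Proof. by case: j / e. Qed.
Lemma ksignN (V : zmodType) i (x : V) : ksign i (- x) = - ksign i x.
Proof. by rewrite /ksign; case: ifP. Qed.
Lemma ksignD (V : zmodType) i (x y : V) : ksign i (x + y) = ksign i x + ksign i y.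
Proof. by rewrite /ksign; case: ifP => // _; rewrite opprD. Qed.
Lemma ksign0 (V : zmodType) i : ksign i (0 : V) = 0.
Proof. by rewrite /ksign; case: ifP => // _; rewrite oppr0. Qed.

Section HA.
Variable A : DGA.
Hypothesis hpos : positively_graded A.
Local Notation Ac := (dga_c A).
Local Notation dA := (@dga_d A _).
Local Notation mul := (@dga_mul A _ _).

Lemma dA0' j : dA (0 : Ac j) = 0.
Proof. by apply: (addrI (dA (0 : Ac j))); rewrite addr0 -dga_d_add addr0. Qed.
Lemma mul0r' i j (a : Ac i) : mul a (0 : Ac j) = 0.
Proof. by apply: (addrI (mul a (0 : Ac j))); rewrite addr0 -dga_mul_addr addr0. Qed.
Lemma tr_mull i i' j (E : i = i') (a : Ac i) (b : Ac j) :
  mul (tr Ac E a) b = tr Ac (f_equal (fun t => t + j) E) (mul a b).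
Proof. by case: i' / E. Qed.
Lemma tr_dA' j j' (E : j = j') (x : Ac j) :
  dA (tr Ac E x) = tr Ac (f_equal (fun t => t - 1) E) (dA x).
Proof. by case: j' / E. Qed.
Lemma tr_inv (C : int -> Type) i j (E : i = j) (x : C i) y : tr C E x = y -> x = tr C (esym E) y.
Proof. by move=> H; subst y; case: j / E. Qed.

Lemma HA_low k : k < 0 -> HA_vanishes A k.
Proof. move=> lt z _; exists 0; rewrite dA0' tr0; exact: hpos. Qed.

Lemma HA0 : HA_vanishes A 0 -> forall k, HA_vanishes A k.
Proof.
move=> h0 k z dz.
have [y hy] : exists y : Ac (0 + 1), dga_one A = tr Ac (deg_succ 0) (dA y).
  apply: h0; apply: hpos; done.
have E : (0 + 1) + k = k + 1 by lia.
exists (tr Ac E (mul y z)).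
rewrite tr_dA' dga_leibniz dz mul0r' tr0 ksign0 addr0 !tr_tr.
rewrite {1}(tr_inv (esym (dga_mul_1l z))).
rewrite hy tr_mull !tr_tr; exact: tr_irr.
Qed.

Lemma HA_high s : HA_nonzero_amp A s -> forall k, s < k -> HA_vanishes A k.
Proof.
move=> [i0 [i1 [n0 n1 hall ->]]] k lt; apply: NNPP => nv.
have /andP [h1 h2] := hall k nv.
have : ~ HA_vanishes A 0 by move=> h; apply: n1; exact: HA0.
move/hall => /andP [h3 _].
lia.
Qed.
End HA.

Section Lin.
Variable A : DGA.
Variable L : DGMod A.
Variables (I : eqType) (deg : I -> int) (e : forall b : I, dgm_c L (deg b)).
Hypothesis hpos : positively_graded A.
Hypothesis hB : is_semibasis e.

Local Notation Ac := (dga_c A).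
Local Notation Lc := (dgm_c L).
Local Notation dA := (@dga_d A _).
Local Notation dL := (@dgm_d A L _).
Local Notation act := (@dgm_act A L _ _).
Local Notation mul := (@dga_mul A _ _).

Lemma act0l i j (x : Lc j) : act (0 : Ac i) x = 0.
Proof. by apply: (addrI (act (0 : Ac i) x)); rewrite addr0 -dgm_act_addl addr0. Qed.
Lemma actNl i j (a : Ac i) (x : Lc j) : act (- a) x = - act a x.
Proof. by apply/eqP; rewrite -subr_eq0 opprK -dgm_act_addl addNr act0l. Qed.
Lemma act0r i j (a : Ac i) : act a (0 : Lc j) = 0.
Proof. by apply: (addrI (act a (0 : Lc j))); rewrite addr0 -dgm_act_addr addr0. Qed.
Lemma actMnl i j (a : Ac i) (x : Lc j) n : act (a *+ n) x = act a x *+ n.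
Proof. elim: n => [|n IH]; first by rewrite !mulr0n act0l. by rewrite !mulrS dgm_act_addl IH. Qed.
Lemma actsumr i j (a : Ac i) (T : Type) (s : seq T) (F : T -> Lc j) :
  act a (\sum_(t <- s) F t) = \sum_(t <- s) act a (F t).
Proof. elim: s => [|t s IH]; first by rewrite !big_nil act0r. by rewrite !big_cons dgm_act_addr IH. Qed.
Lemma dL0 j : dL (0 : Lc j) = 0.
Proof. by apply: (addrI (dL (0 : Lc j))); rewrite addr0 -dgm_d_add addr0. Qed.
Lemma dLN j (x : Lc j) : dL (- x) = - dL x.
Proof. by apply/eqP; rewrite -subr_eq0 opprK -dgm_d_add addNr dL0. Qed.
Lemma dLsum j (T : Type) (s : seq T) (F : T -> Lc j) :
  dL (\sum_(t <- s) F t) = \sum_(t <- s) dL (F t).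
Proof. elim: s => [|t s IH]; first by rewrite !big_nil dL0. by rewrite !big_cons dgm_d_add IH. Qed.
Lemma dA0 j : dA (0 : Ac j) = 0.
Proof. by apply: (addrI (dA (0 : Ac j))); rewrite addr0 -dga_d_add addr0. Qed.

Definition lin k (S : seq I) (c : forall b, Ac (k - deg b)) : Lc k :=
  \sum_(b <- S) tr Lc (deg_basis k (deg b)) (act (c b) (e b)).
Arguments lin : clear implicits.

Lemma lin_ext k S c c' : {in S, forall b, c b = c' b} -> lin k S c = lin k S c'.
Proof. by move=> H; apply: eq_big_seq => b /H ->. Qed.
Lemma lin_add k S c c' : lin k S c + lin k S c' = lin k S (fun b => c b + c' b).
Proof. by rewrite /lin -big_split; apply: eq_bigr => b _; rewrite dgm_act_addl trD. Qed.
Lemma lin_opp k S c : - lin k S c = lin k S (fun b => - c b).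
Proof. by rewrite /lin -sumrN; apply: eq_bigr => b _; rewrite actNl trN. Qed.
Lemma lin_cat k S S' c : lin k (S ++ S') c = lin k S c + lin k S' c.
Proof. by rewrite /lin big_cat. Qed.

Lemma sum_sub (V : zmodType) (U S : seq I) (F : I -> V) : uniq U -> {subset S <= U} ->
  \sum_(b <- S) F b = \sum_(b <- U) F b *+ count_mem b S.
Proof.
move=> uU; elim: S => [|a S IH] sub.
  by rewrite big_nil big1 // => b _; rewrite mulr0n.
rewrite big_cons IH; last by move=> x xS; apply: sub; rewrite inE xS orbT.
have aU : a \in U by apply: sub; rewrite inE eqxx.
rewrite (bigD1_seq a) //= (bigD1_seq a aU uU) /= [count_mem a _]/= eqxx.
rewrite addrA -mulrS add1n; congr (_ + _).
by apply: eq_bigr => b nb; rewrite eq_sym (negbTE nb) add0n.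
Qed.

Lemma lin_sub k U S c : uniq U -> {subset S <= U} ->
  lin k S c = lin k U (fun b => c b *+ count_mem b S).
Proof.
move=> uU sub; rewrite /lin (sum_sub _ uU sub); apply: eq_bigr => b _.
by rewrite actMnl trMn.
Qed.

Lemma tr_actr i j j' (E : j = j') (a : Ac i) (x : Lc j) :
  act a (tr Lc E x) = tr Lc (f_equal (fun t => i + t) E) (act a x).
Proof. by case: j' / E. Qed.
Lemma tr_actl i i' j (E : i = i') (a : Ac i) (x : Lc j) :
  act (tr Ac E a) x = tr Lc (f_equal (fun t => t + j) E) (act a x).
Proof. by case: i' / E. Qed.
Lemma tr_dL j j' (E : j = j') (x : Lc j) :
  dL (tr Lc E x) = tr Lc (f_equal (fun t => t - 1) E) (dL x).
Proof. by case: j' / E. Qed.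
Lemma tr_dA j j' (E : j = j') (x : Ac j) :
  dA (tr Ac E x) = tr Ac (f_equal (fun t => t - 1) E) (dA x).
Proof. by case: j' / E. Qed.
Lemma tr_ksign (C : int -> zmodType) j j' (E : j = j') i (x : C j) :
  ksign i (tr C E x) = tr C E (ksign i x).
Proof. by case: j' / E. Qed.
Lemma tr_lin k k' (E : k = k') S c :
  tr Lc E (lin k S c) = lin k' S (fun b => tr Ac (f_equal (fun t => t - deg b) E) (c b)).
Proof. by case: k' / E. Qed.

Definition inF k (q : int) (x : Lc k) :=
  exists S c, (forall b, b \in S -> deg b < q) /\ x = lin k S c.
Arguments inF : clear implicits.

Lemma inF0 k q : inF k q 0.
Proof. by exists [::], (fun b => 0); split => //; rewrite /lin big_nil. Qed.
Lemma inF_add k q x y : inF k q x -> inF k q y -> inF k q (x + y).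
Proof.
move=> [S [c [hS ->]]] [S' [c' [hS' ->]]].
have uU := undup_uniq (S ++ S').
rewrite (@lin_sub k (undup (S ++ S')) S) //; last by move=> b bS; rewrite mem_undup mem_cat bS.
rewrite (@lin_sub k (undup (S ++ S')) S') //; last by move=> b bS; rewrite mem_undup mem_cat bS orbT.
rewrite lin_add; eexists; eexists; split; last reflexivity.
by move=> b; rewrite mem_undup mem_cat => /orP [/hS|/hS'].
Qed.
Lemma inF_opp k q x : inF k q x -> inF k q (- x).
Proof. by move=> [S [c [hS ->]]]; rewrite lin_opp; exists S; eexists. Qed.
Lemma inF_sum (T : eqType) (s : seq T) k q (F : T -> Lc k) :
  (forall t, t \in s -> inF k q (F t)) -> inF k q (\sum_(t <- s) F t).
Proof.
elim: s => [|t s IH] H; first by rewrite big_nil; apply: inF0.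
rewrite big_cons; apply: inF_add; first by apply: H; rewrite inE eqxx.
by apply: IH => u us; apply: H; rewrite inE us orbT.
Qed.
Lemma inF_mono k q q' x : q <= q' -> inF k q x -> inF k q' x.
Proof. move=> le [S [c [hS ->]]]; exists S, c; split => // b /hS h; exact: lt_le_trans h le. Qed.
Lemma inF_tr k k' (E : k = k') q x : inF k q x -> inF k' q (tr Lc E x).
Proof. by move=> [S [c [hS ->]]]; rewrite tr_lin; exists S; eexists. Qed.
Lemma inF_ksign k q i x : inF k q x -> inF k q (ksign i x).
Proof. by rewrite /ksign; case: ifP => // _; apply: inF_opp. Qed.

Lemma deg_act (i j d : int) : i + (j - d) = (i + j) - d.
Proof. by rewrite addrA. Qed.

Lemma lin_act i j S c (a : Ac i) :
  act a (lin j S c) = lin (i + j) S (fun b => tr Ac (deg_act i j (deg b)) (mul a (c b))).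
Proof.
rewrite /lin actsumr; apply: eq_bigr => b _.
rewrite tr_actr tr_actl tr_tr dgm_act_assoc tr_tr; exact: tr_irr.
Qed.
Lemma inF_act i j q (a : Ac i) x : inF j q x -> inF (i + j) q (act a x).
Proof. by move=> [S [c [hS ->]]]; rewrite lin_act; exists S; eexists. Qed.

Lemma inF_d_basis b : inF (deg b - 1) (deg b) (dL (e b)).
Proof.
have [S [c ->]] := hB.1 (deg b - 1) (dL (e b)).
exists [seq b' <- S | deg b' < deg b], c; split.
  by move=> b'; rewrite mem_filter => /andP[].
rewrite /lin big_filter [RHS]big_mkcond; apply: eq_bigr => b' _.
case: ifP => // /negbT nlt; have -> : c b' = 0 by apply: hpos; lia.
by rewrite act0l tr0.
Qed.

Definition EdK (K d : int) : (K - d) - 1 = (K - 1) - d := addrAC K (- d) (- 1).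

Lemma lin_d K q S c : (forall b, b \in S -> deg b <= q) ->
  exists V, inF (K - 1) q V /\
   dL (lin K S c) = lin (K - 1) S (fun b => tr Ac (EdK K (deg b)) (dA (c b))) + V.
Proof.
move=> hS.
exists (\sum_(b <- S) tr Lc (f_equal (fun t => t - 1) (deg_basis K (deg b)))
   (ksign (K - deg b) (tr Lc (deg_dr (K - deg b) (deg b)) (act (c b) (dL (e b)))))).
split.
  apply: inF_sum => b bS; apply: inF_tr; apply: inF_ksign; apply: inF_tr; apply: inF_act.
  exact: (inF_mono (hS b bS) (inF_d_basis b)).
rewrite /lin dLsum -big_split; apply: eq_bigr => b _.
rewrite tr_dL dgm_leibniz trD; congr (_ + _).
rewrite tr_tr tr_actl tr_tr; exact: tr_irr.
Qed.

Variable s : int.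
Hypothesis hs : forall k, s < k -> HA_vanishes A k.
Arguments lin_d : clear implicits.
Arguments lin_sub : clear implicits.

Definition Ea (K d : int) : (K - d) + 1 = (K + 1) - d := addrAC K (- d) 1.

Lemma main_step n (hn : forall b, n <= deg b) k (hk : forall b, s < k - deg b) (N : nat) :
  forall z : Lc k, dL z = 0 -> inF k (n + N%:Z) z ->
  exists y : Lc (k + 1), z = tr Lc (deg_succ k) (dL y).
Proof.
elim: N => [|N IH] z dz.
  move=> [S [c [hS ->]]]; exists 0; rewrite dL0 tr0 /lin big1_seq // => b /andP [_ bS].
  by have := hS b bS; have := hn b; lia.
move=> [S0 [c0 [hS0 z0]]].
set p := n + N%:Z.
have [U [c [uU [hU hz]]]] : exists U c, uniq U /\ (forall b, b \in U -> deg b <= p) /\ z = lin k U c.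
  exists (undup S0), (fun b => c0 b *+ count_mem b S0); split; first exact: undup_uniq.
  split; first by move=> b; rewrite mem_undup => /hS0; rewrite /p; lia.
  by rewrite z0; apply: lin_sub => //; [exact: undup_uniq | move=> b; rewrite mem_undup].
clear z0 hS0; subst z; clear c0 S0.
set T := [seq b <- U | deg b == p]; set R := [seq b <- U | deg b != p].
have split_lin : forall K (f : forall b, Ac (K - deg b)), lin K U f = lin K T f + lin K R f.
  by move=> K f; rewrite /lin !big_filter (bigID (fun b => deg b == p)).
have hR : forall b, b \in R -> deg b < p.
  by move=> b; rewrite mem_filter => /andP [/eqP h1 /hU h2]; lia.
have hT : forall b, b \in T -> deg b = p by move=> b; rewrite mem_filter => /andP [/eqP].
have dc0 : forall b, b \in T -> dA (c b) = 0.
  have [V [hV hdz]] := lin_d k p U c hU.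
  rewrite dz split_lin -addrA in hdz.
  set C1 := (fun b => tr Ac (EdK k (deg b)) (dA (c b))) in hdz.
  have hW : inF (k - 1) p (lin (k - 1) R C1 + V).
    by apply: inF_add => //; exists R, C1; split => // b /hR.
  have [W [w [hW' eW]]] := hW; rewrite eW in hdz.
  rewrite (lin_sub (k - 1) (undup W) W) in hdz; last 2 first.
  - exact: undup_uniq.
  - by move=> b; rewrite mem_undup.
  set WU := undup W in hdz; set w' := (fun b => w b *+ count_mem b W) in hdz.
  pose Cc := fun b => if deg b == p then C1 b else w' b.
  have hWU : forall b, b \in WU -> deg b < p by move=> b; rewrite mem_undup => /hW'.
  have uTW : uniq (T ++ WU).
    rewrite cat_uniq filter_uniq // undup_uniq andbT; apply/hasPn => b bW; apply/negP => bT.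
    by have := hT b bT; have := hWU b bW; lia.
  have : lin (k - 1) (T ++ WU) Cc = 0.
    rewrite lin_cat hdz; congr (_ + _); apply: lin_ext => b bX; rewrite /Cc.
      by have -> : (deg b == p) = true by apply/eqP; exact: hT b bX.
    have -> // : (deg b == p) = false by apply/eqP; have := hWU b bX; lia.
  move/(hB.2 _ _ _ uTW) => H b bT; have := H b; rewrite mem_cat bT /Cc.
  have -> : (deg b == p) = true by apply/eqP; exact: hT b bT.
  by move=> /(_ isT) /tr_eq0.
have ha : forall b, exists a : Ac (k - deg b + 1), dA (c b) = 0 -> c b = tr Ac (deg_succ _) (dA a).
  move=> b; case: (classic (dA (c b) = 0)) => h.
    by have [a ha] := hs (hk b) h; exists a.
  by exists 0.
pose a := fun b => proj1_sig (constructive_indefinite_description _ (ha b)).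
have haP : forall b, b \in T -> c b = tr Ac (deg_succ _) (dA (a b)).
  by move=> b bT; exact: (proj2_sig (constructive_indefinite_description _ (ha b)) (dc0 b bT)).
pose a2 := fun b => tr Ac (Ea k (deg b)) (a b).
have hT' : forall b, b \in T -> deg b <= p by move=> b /hT ->.
have [V2 [hV2 hdy]] := lin_d (k + 1) p T a2 hT'.
set y1 := lin (k + 1) T a2 in hdy.
have ey1 : tr Lc (deg_succ k) (dL y1) = lin k T c + tr Lc (deg_succ k) V2.
  rewrite hdy trD tr_lin; congr (_ + _); apply: lin_ext => b bT.
  rewrite (haP b bT) /a2 tr_dA !tr_tr; exact: tr_irr.
pose z' := lin k U c - tr Lc (deg_succ k) (dL y1).
have hz' : inF k p z'.
  rewrite /z' ey1.
  have -> : lin k U c - (lin k T c + tr Lc (deg_succ k) V2) = lin k R c - tr Lc (deg_succ k) V2.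
    by rewrite split_lin opprD addrACA subrr add0r.
  apply: inF_add; first by exists R, c; split => // b /hR.
  by apply: inF_opp; apply: inF_tr.
have dz' : dL z' = 0 by rewrite /z' dgm_d_add dLN dz tr_dL dgm_dd tr0 oppr0 addr0.
have [y' hy'] := IH z' dz' hz'.
by exists (y' + y1); rewrite dgm_d_add trD -hy' /z' subrK.
Qed.
End Lin.


Theorem proposition3p2 (A : DGA) (s : int)
    (hpos : positively_graded A) (hamp : HA_nonzero_amp A s)
    (L : DGMod A) (hL0 : exists (k : int) (x : dgm_c L k), x != 0)
    (hLbdd : bounded_below L)
    (I : eqType) (deg : I -> int) (e : forall b : I, dgm_c L (deg b))
    (hB : is_semibasis e)
    (n m : int) (hm : 0 <= m) (hdeg : forall b : I, n <= deg b <= n + m) :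
  (forall k : int, k < n -> HL_vanishes L k) /\
  (forall k : int, s + n + m < k -> HL_vanishes L k) /\
  (forall i j : int, ~ HL_vanishes L i -> ~ HL_vanishes L j -> j - i <= s + m).
Proof.
have hs : forall k, s < k -> HA_vanishes A k by move=> k h; apply: (HA_high hpos hamp).
have P1 : forall k, k < n -> HL_vanishes L k.
  move=> k lt z _; exists 0; rewrite dL0 tr0.
  have [S [c ->]] := hB.1 k z; rewrite big1 // => b _.
  have -> : c b = 0 by apply: hpos; case/andP: (hdeg b) => h1 h2; lia.
  by rewrite act0l tr0.
have [N eN] : exists N : nat, m = N%:Z by case: m hm {hdeg} => // N _; exists N.
have P2 : forall k, s + n + m < k -> HL_vanishes L k.
  move=> k lt z dz.
  apply: (@main_step A L I deg e hpos hB s hs n _ k _ N.+1 z dz).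
  - by move=> b; case/andP: (hdeg b) => h1 h2; lia.
  - by move=> b; case/andP: (hdeg b) => h1 h2; lia.
  - have [S [c hz]] := hB.1 k z; exists S, c; split => // b _.
    by case/andP: (hdeg b) => h1 h2; lia.
split; first exact: P1.
split; first exact: P2.
move=> i j hi hj.
have h1 : ~ (i < n) by move=> lt; exact: hi (P1 i lt).
have h2 : ~ (s + n + m < j) by move=> lt; exact: hj (P2 j lt).
lia.
Qed.
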